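(* Let $\alpha\ge1$, $\beta$ odd, and let ${\cal C}=\langle (b\mid 0),(\ell\mid fh+2f)\rangle\subseteq R_{\alpha,\beta}$ be a $\mathbb{Z}_2\mathbb{Z}_4$-additive cyclic code, where $f,h,g\in\mathbb{Z}_4[x]$ with $fhg=x^\beta-1$, $b\in\mathbb{Z}_2[x]$ divides $x^\alpha-1$, and $\ell\in\mathbb{Z}_2[x]/(x^\alpha-1)$. If ${\cal C}_b=\langle (b\mid 0),(0\mid 2f)\rangle$, then $\Phi({\cal C})$ is linear if and only if $\phi({\cal C}_Y)$ is linear.
   Context: $R_{\alpha,\beta}=\mathbb{Z}_2[x]/(x^\alpha-1)\times\mathbb{Z}_4[x]/(x^\beta-1)$, identified with $\mathbb{Z}_2^\alpha\times\mathbb{Z}_4^\beta$ via coefficient vectors; it is a $\mathbb{Z}_4[x]$-module via $p\star(b\mid a)=(\tilde pb\mid pa)$, where $\tilde p$ is the reduction of $p$ mod 2. A $\mathbb{Z}_2\mathbb{Z}_4$-additive cyclic code is a $\mathbb{Z}_4[x]$-submodule of $R_{\alpha,\beta}$, and $\langle\cdot\rangle$ denotes the generated submodule. ${\cal C}_b$ is the subcode of codewords of order at most 2; ${\cal C}_Y$ is the projection onto the last $\beta$ coordinates. Gray map: for $u'\in\mathbb{Z}_4^n$ with $u'_i=\tilde u'_i+2\hat u'_i$, $\tilde u'_i,\hat u'_i\in\{0,1\}$, $\phi(u')=(\hat u'_0,\dots,\hat u'_{n-1},\tilde u'_0+\hat u'_0,\dots,\tilde u'_{n-1}+\hat u'_{n-1})$;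 $\Phi(u\mid u')=(u\mid\phi(u'))$. Linear means a $\mathbb{Z}_2$-subspace. *)

(* Defs.v *)
From HB Require Import structures.
From mathcomp Require Import all_boot all_order all_algebra.
Set Implicit Arguments. Unset Strict Implicit. Unset Printing Implicit Defensive.
Import GRing.Theory.
Local Open Scope ring_scope.

(* Z2 is 'F_2, Z4 is 'Z_4.  Elements of R_{alpha,beta} are identified with
   their coefficient vectors in Z2^alpha x Z4^beta. *)
Definition Relt (alpha beta : nat) : Type := ('rV['F_2]_alpha * 'rV['Z_4]_beta)%type.

(* reduction of a polynomial modulo x^n - 1, as a coefficient vector *)
Definition vec_of_poly (R : nzRingType) (n : nat) (p : {poly R}) : 'rV[R]_n :=
  \row_(i < n) \sum_(j < size p | ((j %% n)%N == i)) p`_j.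

Definition poly_of_vec (R : nzRingType) (n : nat) (v : 'rV[R]_n) : {poly R} :=
  \sum_(i < n) v 0 i *: 'X^i.

Definition red2 (c : 'Z_4) : 'F_2 := (val c)%:R.
Definition red2p (p : {poly 'Z_4}) : {poly 'F_2} := map_poly red2 p.

Definition Rzero alpha beta : Relt alpha beta := (0, 0).
Definition Radd alpha beta (x y : Relt alpha beta) : Relt alpha beta :=
  (x.1 + y.1, x.2 + y.2).

(* Z4[x]-module action  p * (b | a) = (p~ b | p a) *)
Definition Ract alpha beta (p : {poly 'Z_4}) (x : Relt alpha beta) : Relt alpha beta :=
  (vec_of_poly alpha (red2p p * poly_of_vec x.1),
   vec_of_poly beta (p * poly_of_vec x.2)).

Definition Relt_of alpha beta (u : {poly 'F_2}) (v : {poly 'Z_4}) : Relt alpha beta :=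
  (vec_of_poly alpha u, vec_of_poly beta v).

(* Z4[x]-submodules ( = Z2Z4-additive cyclic codes ) *)
Definition is_submodule alpha beta (M : Relt alpha beta -> Prop) : Prop :=
  [/\ M (Rzero alpha beta),
      (forall x y, M x -> M y -> M (Radd x y)) &
      (forall p x, M x -> M (Ract p x))].

Definition gen alpha beta (S : Relt alpha beta -> Prop) (x : Relt alpha beta) : Prop :=
  forall M, is_submodule M -> (forall y, S y -> M y) -> M x.

Definition gen2 alpha beta (g1 g2 : Relt alpha beta) : Relt alpha beta -> Prop :=
  gen (fun y => y = g1 \/ y = g2).

Definition order_le2 alpha beta (x : Relt alpha beta) : Prop :=
  Radd x x = Rzero alpha beta.
Definition Cb alpha beta (C : Relt alpha beta -> Prop) (x : Relt alpha beta) : Prop :=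
  C x /\ order_le2 x.

Definition CY alpha beta (C : Relt alpha beta -> Prop) (v : 'rV['Z_4]_beta) : Prop :=
  exists x, C x /\ x.2 = v.

(* Gray map; for c = t + 2 h with t,h in {0,1}: t = val c %% 2, h = val c %/ 2 *)
Definition gray_hat (c : 'Z_4) : 'F_2 := (val c %/ 2)%:R.
Definition gray_tilde (c : 'Z_4) : 'F_2 := (val c %% 2)%:R.

Definition phi n (v : 'rV['Z_4]_n) : 'rV['F_2]_(n + n) :=
  \row_(j < n + n) match split j with
                   | inl i => gray_hat (v 0 i)
                   | inr i => gray_tilde (v 0 i) + gray_hat (v 0 i)
                   end.

Definition Phi alpha beta (x : Relt alpha beta) : 'rV['F_2]_(alpha + (beta + beta)) :=
  row_mx x.1 (phi x.2).

Definition img (A B : Type) (f : A -> B) (S : A -> Prop) (y : B) : Prop :=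
  exists x, S x /\ f x = y.

Definition linear_set n (S : 'rV['F_2]_n -> Prop) : Prop :=
  S 0 /\ forall (a : 'F_2) u v, S u -> S v -> S (a *: u + v).

(* Main.v *)
Require Import Defs.
From HB Require Import structures.
From mathcomp Require Import all_boot all_order all_algebra.
Import GRing.Theory.
Local Open Scope ring_scope.

Lemma z4a (a b c : 'Z_4) : a + (b + (c + (a+(a+a) + (b+(b+b))))) = c.
Proof.
case: a => [[|[|[|[|?]]]] ?] //; case: b => [[|[|[|[|?]]]] ?] //;
case: c => [[|[|[|[|?]]]] ?] //; by apply/val_inj.
Qed.

Lemma z4b (a b c : 'Z_4) : gray_hat c == gray_hat a + gray_hat b ->
  gray_tilde c + gray_hat c == gray_tilde a + gray_hat a + (gray_tilde b + gray_hat b) ->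
  (c + (a+(a+a) + (b+(b+b)))) + (c + (a+(a+a) + (b+(b+b)))) = 0.
Proof.
case: a => [[|[|[|[|?]]]] ?] //; case: b => [[|[|[|[|?]]]] ?] //;
case: c => [[|[|[|[|?]]]] ?] //; by move=> _ _; apply/val_inj.
Qed.

Lemma gen_sub alpha beta (S : Relt alpha beta -> Prop) : is_submodule (gen S).
Proof.
split.
- by move=> M [] ? ? ? _.
- by move=> x y Hx Hy M HM HS; case: (HM) => _ Hadd _; apply: Hadd; [apply: Hx|apply: Hy].
- by move=> p x Hx M HM HS; case: (HM) => _ _ Hact; apply: Hact; apply: Hx.
Qed.

Lemma vec0 (R : nzRingType) n : vec_of_poly n (0 : {poly R}) = 0.
Proof. by apply/rowP => i; rewrite !mxE size_poly0 big_ord0. Qed.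

Lemma pov0 (R : nzRingType) n : poly_of_vec (0 : 'rV[R]_n) = 0.
Proof. by rewrite /poly_of_vec big1 // => i _; rewrite mxE scale0r. Qed.

Lemma phi0 beta : phi (0 : 'rV['Z_4]_beta) = 0.
Proof.
apply/rowP => j; rewrite !mxE.
by case: (split j) => i; rewrite mxE /gray_hat /gray_tilde /= ?addr0.
Qed.

Theorem mainTheorem4 (alpha beta : nat) (f h g : {poly 'Z_4})
    (b l : {poly 'F_2}) :
  (1 <= alpha)%N -> odd beta ->
  f * h * g = 'X^beta - 1 ->
  b %| 'X^alpha - 1 ->
  let C := gen2 (Relt_of alpha beta b 0) (Relt_of alpha beta l (f * h + f *+ 2)) in
  (forall x, Cb C x <-> gen2 (Relt_of alpha beta b 0) (Relt_of alpha beta 0 (f *+ 2)) x) ->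
  (linear_set (img (@Phi alpha beta) C) <-> linear_set (img (@phi beta) (CY C))).
Proof.
move=> _ _ _ _ C HCb.
have [C0 Cadd Cact] : is_submodule C by apply: gen_sub.
split.
- move=> [_ Hlin]; split.
    exists 0; split; last first.
      by rewrite phi0.
    by exists (Rzero alpha beta).
  move=> a _ _ [p [[x [Cx <-]] <-]] [q [[y [Cy <-]] <-]].
  have [z [Cz Ez]] := Hlin a (Phi x) (Phi y) (ex_intro _ x (conj Cx erefl)) (ex_intro _ y (conj Cy erefl)).
  exists z.2; split; first by exists z.
  have := congr1 (@rsubmx _ 1 alpha (beta + beta)) Ez.
  by rewrite /Phi scale_row_mx add_row_mx !row_mxKr.
- move=> [_ Hlin]; split.
    exists (Rzero alpha beta); split => //.
    rewrite /Phi /=. 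
    have -> : phi (0 : 'rV['Z_4]_beta) = 0.
      by rewrite phi0.
    by rewrite row_mx0.
  have Hsum : forall u v, C u -> C v -> img (@Phi alpha beta) C (Phi u + Phi v).
    move=> u v Cu Cv.
    have Iu : img (@phi beta) (CY C) (phi u.2) by exists u.2; split => //; exists u.
    have Iv : img (@phi beta) (CY C) (phi v.2) by exists v.2; split => //; exists v.
    have [w' [[w [Cw Ew]] Ew']] := Hlin 1 _ _ Iu Iv.
    rewrite scale1r -Ew in Ew'.
    set z : Relt alpha beta := Radd w (Radd (Radd u (Radd u u)) (Radd v (Radd v v))).

    have Cz : C z by apply: (Cadd) => //; apply: (Cadd); apply: (Cadd) => //; apply: (Cadd).
    have z2 : order_le2 z.
      rewrite /order_le2 /Radd /Rzero /=; congr pair.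
        apply/rowP => i; rewrite !mxE.
        by case: (w.1 0 i) => [[|[|?]] ?] //; case: (u.1 0 i) => [[|[|?]] ?] //;
           case: (v.1 0 i) => [[|[|?]] ?] //; apply/val_inj.
      apply/rowP => i; rewrite !mxE; apply: z4b.
        have := congr1 (fun r : 'rV_(beta+beta) => r 0 (lshift beta i)) Ew'.
        by rewrite !mxE (unsplitK (inl _ i)) => ->.
      have := congr1 (fun r : 'rV_(beta+beta) => r 0 (rshift beta i)) Ew'.
      by rewrite !mxE (unsplitK (inr _ i)) => ->.
    have Gz := (HCb z).1 (conj Cz z2).
    pose M := fun x : Relt alpha beta => C (0, x.2).
    have Mz : M z.
      apply: Gz; last first.
        move=> y [->|->]; rewrite /M /Relt_of /= ?vec0.
          by rewrite -[(0,0)]/(Rzero alpha beta).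
        have G : gen2 (Relt_of alpha beta b 0) (Relt_of alpha beta 0 (f *+ 2))
                   (Relt_of alpha beta 0 (f *+ 2)).
          by move=> N _ HN; apply: HN; right.
        have [HC _] := (HCb _).2 G.
        by move: HC; rewrite /Relt_of vec0.
      split.
      + by [].
      + move=> x y Mx My; rewrite /M /=.
        by have := Cadd _ _ Mx My; rewrite /Radd /= addr0.
      + move=> p x Mx; rewrite /M /=.
        by have := Cact p _ Mx; rewrite /Ract /= pov0 mulr0 vec0.
    exists (Radd u (Radd v (0, z.2))); split.
      by apply: (Cadd) => //; apply: (Cadd).
    rewrite /Phi /= add_row_mx addr0; congr row_mx.
    rewrite -Ew'; apply: congr1; apply/rowP => i; rewrite !mxE; apply: z4a.
  move=> a _ _ [x [Cx <-]] [y [Cy <-]].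
  case: a => [[|[|?]] Ha] //.
  + have -> : Ordinal Ha = 0 :> 'F_2 by apply/val_inj.
    by rewrite scale0r add0r; exists y.
  + have -> : Ordinal Ha = 1 :> 'F_2 by apply/val_inj.
    by rewrite scale1r; apply: Hsum.
Qed.
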